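(* Let $L$ be a number field, $\Gamma$ an order of $L$, $K\subseteq L$ a subfield with ring of integers $\mathcal O_K$ and $n=[L:K]$, $R=\mathrm M_n(\mathcal O_K)$, and $\varphi:K\to L$ a ring morphism. Then there is a bijection $\operatorname{Hom}_\varphi(\Gamma,R)/R^\times\cong J_\varphi$.
   Context: $L$ is a $K$-algebra via $\varphi$; a ring morphism $\rho:\Gamma\to R$ is $\varphi$-compatible if $\rho\otimes\mathbb Q:L\to\mathrm M_n(K)$ is a morphism of $K$-algebras; $\operatorname{Hom}_\varphi(\Gamma,R)$ is the set of such $\rho$, on which $R^\times$ acts by conjugation. Fix a positive integer $z$ with $\varphi(z\mathcal O_K)\subseteq\Gamma$ and let $\mathcal O'=\mathbb Z[z\mathcal O_K]\subseteq\mathcal O_K$; then $\varphi$ restricts to a ring morphism $\mathcal O'\to\Gamma$, giving each $\Gamma$-module $X$ an $\mathcal O'$-module structure $X|_{\mathcal O'}$. Let $\mathcal O_K^n|_{\mathcal O'}$ be $\mathcal O_K^n$ with the $\mathcal O'$-action by (diagonal) multiplication through $\mathcal O'\subseteq\mathcal O_K$. $J_\varphi$ is the set of isomorphism classes of $\Gamma$-modules $X$ with $X|_{\mathcal O'}\cong\mathcal O_K^n|_{\mathcal O'}$ as $\mathcal O'$-modules (this set does not depend on the choice of $z$). *)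

(* Defs.v *)
From HB Require Import structures.
From mathcomp Require Import all_boot all_order all_algebra all_field.
Set Implicit Arguments. Unset Strict Implicit. Unset Printing Implicit Defensive.
Import Order.TTheory GRing.Theory Num.Theory.
Local Open Scope ring_scope.

Definition intgr (F : fieldType) (x : F) : Prop :=
  integralOver (fun k : int => k%:~R : F) x.

Definition is_order (L : fieldExtType rat) (G : pred L) : Prop :=
  [/\ 1 \in G,
      (forall x y, x \in G -> y \in G -> x - y \in G),
      (forall x y, x \in G -> y \in G -> x * y \in G) &
      exists b : seq L, basis_of fullv b /\
        forall x, x \in G <-> exists c : 'I_(size b) -> int,
                    x = \sum_(i < size b) ((c i)%:~R : rat) *: b`_i ].

(* The ring O' = Z[z O_K] generated by z times the ring of integers of F. *)
Inductive in_Zadj (F : fieldType) (z : nat) : F -> Prop :=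
  | Zadj1 : in_Zadj z 1
  | Zadj_gen a : intgr a -> in_Zadj z (z%:R * a)
  | ZadjB a b : in_Zadj z a -> in_Zadj z b -> in_Zadj z (a - b)
  | ZadjM a b : in_Zadj z a -> in_Zadj z b -> in_Zadj z (a * b).

Section Hom.
Variables (L : fieldExtType rat) (K : {subfield L}).
Local Notation KK := (subvs_of K).

(* phi-compatible ring morphisms Gamma -> M_n(O_K); rho is given as a function
   on L, only its values on Gamma matter. *)
Definition HomPhi (G : pred L) (phi : {rmorphism KK -> L}) (n : nat)
    (rho : L -> 'M[KK]_n) : Prop :=
  [/\ rho 1 = 1%:M,
      (forall x y, x \in G -> y \in G -> rho (x + y) = rho x + rho y),
      (forall x y, x \in G -> y \in G -> rho (x * y) = rho x *m rho y),
      (forall x i j, x \in G -> intgr (rho x i j)) &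
      (* rho (x) Q : L = Gamma (x) Q -> M_n(K) is K-linear (L a K-algebra via phi) *)
      exists f : L -> 'M[KK]_n,
        (forall x m, (0 < m)%N -> x *+ m \in G -> f x *+ m = rho (x *+ m)) /\
        (forall (a : KK) x, f (phi a * x) = a *: f x) ].

Definition conjR (G : pred L) (n : nat) (rho rho' : L -> 'M[KK]_n) : Prop :=
  exists U V : 'M[KK]_n,
    [/\ forall i j, intgr (U i j), forall i j, intgr (V i j),
        U *m V = 1%:M, V *m U = 1%:M &
        forall x, x \in G -> rho' x = V *m rho x *m U].
End Hom.

(* A candidate Gamma-module: an abelian group with an action of L
   (only elements of Gamma are required to act). *)
Record gmod (L : fieldExtType rat) := GMod {
  gcar : zmodType;
  gact : L -> gcar -> gcar }.

Definition is_gmod (L : fieldExtType rat) (G : pred L) (X : gmod L) : Prop :=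
  [/\ forall x u v, x \in G -> @gact _ X x (u + v) = @gact _ X x u + @gact _ X x v,
      forall x y u, x \in G -> y \in G -> @gact _ X (x + y) u = @gact _ X x u + @gact _ X y u,
      forall x y u, x \in G -> y \in G -> @gact _ X (x * y) u = @gact _ X x (@gact _ X y u) &
      forall u, @gact _ X 1 u = u ].

Definition gmod_iso (L : fieldExtType rat) (G : pred L) (X Y : gmod L) : Prop :=
  exists f : @gcar _ X -> @gcar _ Y,
    [/\ forall u v, f (u + v) = f u + f v, bijective f &
        forall x u, x \in G -> f (@gact _ X x u) = @gact _ Y x (f u)].

(* X|_{O'} is isomorphic to O_K^n|_{O'} (diagonal multiplication). *)
Definition inJ (L : fieldExtType rat) (K : {subfield L})
    (phi : {rmorphism subvs_of K -> L}) (n z : nat) (X : gmod L) : Prop :=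
  exists g : @gcar _ X -> 'rV[subvs_of K]_n,
    [/\ forall u v, g (u + v) = g u + g v,
        injective g,
        forall u i, intgr (g u 0 i),
        forall w : 'rV[subvs_of K]_n, (forall i, intgr (w 0 i)) -> exists u, g u = w &
        forall c u, in_Zadj z c -> g (@gact _ X (phi c) u) = c *: g u].

(* Main.v *)
Require Import Defs.
From HB Require Import structures.
From mathcomp Require Import all_boot all_order all_algebra all_field.
From mathcomp Require Import ring.
From Stdlib Require Import ClassicalEpsilon.
Import GRing.Theory.
Local Open Scope ring_scope.

Module Aux.
Import Num.Theory.


Section Gen.
Variable (F : fieldType).
Lemma intgr_sub (x y : F) : intgr x -> intgr y -> intgr (x - y).
Proof. exact: (@integral_sub int F intr). Qed.
Lemma intgr_add (x y : F) : intgr x -> intgr y -> intgr (x + y).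
Proof. exact: (@integral_add int F intr). Qed.
Lemma intgr_mul (x y : F) : intgr x -> intgr y -> intgr (x * y).
Proof. exact: (@integral_mul int F intr). Qed.
Lemma intgr0 : intgr (0 : F). Proof. exact: (@integral0 int F intr). Qed.
Lemma intgr1 : intgr (1 : F). Proof. exact: (@integral1 int F intr). Qed.
Lemma intgr_nat k : intgr (k%:R : F). Proof. exact: (@integral_nat int F intr). Qed.
Lemma intgr_int k : intgr (k%:~R : F). Proof. exact: (@integral_id int F intr). Qed.
Lemma intgr_opp (x : F) : intgr x -> intgr (- x).
Proof. exact: (@integral_opp int F intr). Qed.

Lemma intgr_sum k (E : 'I_k -> F) : (forall i, intgr (E i)) -> intgr (\sum_(i < k) E i).
Proof.
move=> h; elim/big_rec: _ => [|i y _ hy]; first exact: intgr0.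
exact: intgr_add.
Qed.

Lemma intgr_mulmx m k p (A : 'M[F]_(m, k)) (B : 'M[F]_(k, p)) :
  (forall i j, intgr (A i j)) -> (forall i j, intgr (B i j)) ->
  forall i j, intgr ((A *m B) i j).
Proof.
move=> hA hB i j; rewrite mxE; apply: intgr_sum => l; exact: intgr_mul.
Qed.
End Gen.

Lemma add_sum (U V : zmodType) (f : U -> V) :
  (forall u v, f (u + v) = f u + f v) ->
  forall k (E : 'I_k -> U), f (\sum_(i < k) E i) = \sum_(i < k) f (E i).
Proof.
move=> hf k E.
have f0 : f 0 = 0 by apply: (addrI (f 0)); rewrite -hf !addr0.
elim/big_rec2: _ => [//|i y1 y2 _ <-]; by rewrite hf.
Qed.

Lemma add_nat (U V : zmodType) (f : U -> V) :
  (forall u v, f (u + v) = f u + f v) -> forall u k, f (u *+ k) = f u *+ k.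
Proof.
move=> hf u; elim=> [|k IH].
  by rewrite !mulr0n; apply: (addrI (f 0)); rewrite -hf !addr0.
by rewrite !mulrS hf IH.
Qed.

Lemma natr_neq0F (F : fieldExtType rat) k : (0 < k)%N -> (k%:R : F) != 0.
Proof.
move=> k0; rewrite -(rmorph_nat (in_alg F)) fmorph_eq0 pnatr_eq0 -lt0n //.
Qed.

Lemma cancel_nat (F : fieldExtType rat) m p (A B : 'M[F]_(m, p)) k :
  (0 < k)%N -> A *+ k = B *+ k -> A = B.
Proof.
move=> k0; rewrite -!(scaler_nat (R := F)) => /(congr1 (fun M => ((k%:R : F)^-1) *: M)) /=.
by rewrite !scalerA mulVf ?natr_neq0F // !scale1r.
Qed.

Section IntVec.
Variables (F : fieldType) (n : nat).
Definition intv : {pred 'rV[F]_n} :=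
  fun w : 'rV[F]_n => if excluded_middle_informative (forall i, intgr (w 0 i)) then true else false.
Lemma intvP (w : 'rV[F]_n) : reflect (forall i, intgr (w 0 i)) (w \in intv).
Proof.
rewrite /intv unfold_in; case: excluded_middle_informative => h; by constructor.
Qed.
Fact intv_zmod : zmod_closed intv.
Proof.
split; first by apply/intvP => i; rewrite mxE; exact: intgr0.
move=> u v /intvP hu /intvP hv; apply/intvP => i; rewrite !mxE.
exact: intgr_sub.
Qed.
HB.instance Definition _ := GRing.isZmodClosed.Build _ intv intv_zmod.
Record ivec := IVec { ival :> 'rV[F]_n; _ : ival \in intv }.
HB.instance Definition _ := [isSub for ival].
HB.instance Definition _ := [Choice of ivec by <:].
HB.instance Definition _ := [SubChoice_isSubZmodule of ivec by <:].
Lemma ivalD (u v : ivec) : ival (u + v) = ival u + ival v.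
Proof. by []. Qed.
End IntVec.
Arguments add_nat {U V f}.
Arguments add_sum {U V f}.
Arguments ival {F n}.
Arguments IVec {F n}.
Arguments intvP {F n w}.



Lemma size_map_le (R S : nzRingType) (f : {rmorphism R -> S}) (p : {poly R}) :
  (size (map_poly f p) <= size p)%N.
Proof. by rewrite map_polyE (leq_trans (size_Poly _)) // size_map. Qed.

Lemma int_root (F : fieldType) (q : {poly int}) (a : F) :
  q != 0 -> root (map_poly intr q) a -> intgr ((lead_coef q)%:~R * a).
Proof.
move=> qnz rq.
set s := size q.
have s0 : (0 < s)%N by rewrite /s size_poly_gt0.
have hq : \sum_(i < s) (q`_i)%:~R * a ^+ i = 0.
  move: rq; rewrite rootE (@horner_coef_wide _ s) ?size_map_le // => /eqP h.
  by rewrite -[RHS]h; apply: eq_bigr => i _; rewrite coef_map.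
case Ek: s.-1 => [|k'].
  have s1 : s = 1%N by move: s0 Ek; case: (s) => // [[]].
  move: hq; rewrite s1 big_ord1 expr0 mulr1.
  have -> : q`_0 = lead_coef q by rewrite lead_coefE -/s s1.
  move=> ->; rewrite mul0r; exact: intgr0.
set l := lead_coef q.
pose r := \poly_(i < s) (if i == s.-1 then 1 else q`_i * l ^+ (k' - i)).
exists r.
  rewrite monicE lead_coef_poly //; by rewrite eqxx.
rewrite rootE (@horner_coef_wide _ s); last first.
  by rewrite (leq_trans (size_map_le _ _ _ _)) // size_poly.
apply/eqP; rewrite -[RHS](mulr0 (l%:~R ^+ k' : F)) -[in RHS]hq mulr_sumr.
apply: eq_bigr => i _.
rewrite coef_map coef_poly ltn_ord.
have ils : (i <= s.-1)%N by rewrite -ltnS prednK // ltn_ord.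
case: eqP => [Ei | nEi].
  rewrite Ei Ek /= /l lead_coefE -/s Ek mul1r exprMn !exprS; ring.
have ik : (i <= k')%N by move: ils nEi; rewrite Ek leq_eqVlt ltnS => /orP[/eqP|].
have -> : forall u : int, (ssrint_intmul__canonical__Algebra_Additive 1 u : F) = u%:~R by [].
rewrite intrM rmorphXn /= exprMn.
have -> : (l%:~R : F) ^+ k' = l%:~R ^+ (k' - i) * l%:~R ^+ i by rewrite -exprD subnK.
ring.
Qed.

Lemma den_int (F : fieldExtType rat) (a : F) :
  exists d : nat, (0 < d)%N /\ intgr (d%:R * a).
Proof.
have /polyOver1P [p Dp] := minPolyOver 1 a.
have ra : root (map_poly (in_alg F) p) a by rewrite -Dp root_minPoly.
have pnz : p != 0.
  apply/eqP=> p0; move: (monic_neq0 (monic_minPoly 1 a)).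
  by rewrite Dp p0 map_poly0 eqxx.
have [q [c c0 Dq]] := rat_poly_scale p.
have qnz : q != 0 by apply: contraNneq pnz => q0; rewrite Dq q0 map_poly0 scaler0.
have rq : root (map_poly intr q) a.
  move: ra; rewrite Dq map_polyZ rootZ; last first.
    by rewrite fmorph_eq0 invr_eq0 intr_eq0.
  rewrite -map_poly_comp; congr (root _ a); apply: eq_map_poly => k /=.
  by rewrite scaler_int.
have ln0 : lead_coef q != 0 by rewrite lead_coef_eq0.
move: ln0 (@int_root F q a qnz rq); case: (lead_coef q) => m ln0 h.
  exists m; split; last exact: h.
  by rewrite lt0n; apply: contra ln0 => /eqP ->.
exists m.+1; split => //.
move: h; rewrite NegzE mulrNz mulNr => /intgr_opp; rewrite opprK //.
Qed.

Lemma common_den k (r : 'I_k -> rat) :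
  exists D : nat, (0 < D)%N /\ forall i, exists e : int, r i * D%:R = e%:~R.
Proof.
pose dn i := `|denq (r i)|%N.
have hdn i : (dn i)%:R = (denq (r i))%:~R :> rat by rewrite /dn; case: (denqP (r i)) => d ->.
have dn0 i : (0 < dn i)%N by rewrite /dn; case: (denqP (r i)) => d ->.
exists (\prod_(i < k) dn i); split; first by rewrite prodn_gt0.
move=> i; exists (numq (r i) * (\prod_(j < k | j != i) dn j)%:R).
rewrite (bigD1 i) //= natrM hdn mulrA -numqE intrM; congr (_ * _).
by rewrite natz.
Qed.

Lemma order_mult (L : fieldExtType rat) (G : pred L) : is_order G ->
  forall x, exists m, (0 < m)%N /\ x *+ m \in G.
Proof.
case=> _ _ _ [b [bb hG]] x.
pose X := in_tuple b.
have Dx : x = \sum_(i < size b) coord X i x *: b`_i by apply: (coord_basis (X := X) bb (memvf x)).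
have [D [D0 hD]] := common_den _ (fun i => coord X i x).
have /fin_all_exists [e he] := hD.
exists D; split => //; apply/hG; exists e.
rewrite -scaler_nat {1}Dx scaler_sumr; apply: eq_bigr => i _.
by rewrite scalerA mulrC he.
Qed.


Set Implicit Arguments. Unset Strict Implicit.

Section Main.
Variables (L : fieldExtType rat) (K : {subfield L}) (G : pred L)
  (phi : {rmorphism subvs_of K -> L}) (n z : nat).
Local Notation KK := (subvs_of K).
Local Notation act X := (@gact _ X).
Hypotheses (hG : is_order G) (z0 : (0 < z)%N)
  (hphi : forall a : KK, intgr a -> phi (z%:R * a) \in G).

Lemma G1 : 1 \in G. Proof. by case: hG. Qed.
Lemma GB x y : x \in G -> y \in G -> x - y \in G. Proof. by case: hG => _ h _ _; apply: h. Qed.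
Lemma GM x y : x \in G -> y \in G -> x * y \in G. Proof. by case: hG => _ _ h _; apply: h. Qed.
Lemma G0 : 0 \in G. Proof. by have := GB G1 G1; rewrite subrr. Qed.
Lemma GD x y : x \in G -> y \in G -> x + y \in G.
Proof. by move=> hx hy; have := GB hx (GB G0 hy); rewrite sub0r opprK. Qed.
Lemma GN x k : x \in G -> x *+ k \in G.
Proof. by move=> hx; elim: k => [|k IH]; rewrite ?mulr0n ?G0 // mulrS GD. Qed.

Lemma phiG c : in_Zadj z c -> phi c \in G.
Proof.
elim=> [|a ha|a b _ ha _ hb|a b _ ha _ hb].
- by rewrite rmorph1 G1.
- exact: hphi.
- by rewrite rmorphB GB.
- by rewrite rmorphM GM.
Qed.

Definition gadd (U V : zmodType) (f : U -> V) := forall u v, f (u + v) = f u + f v.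

Lemma lin_lemma (X : gmod L) (g : gcar X -> 'rV[KK]_n) (T : gcar X -> gcar X) :
  gadd g -> injective g ->
  (forall a u, intgr a -> g (act X (phi (z%:R * a)) u) = (z%:R * a) *: g u) ->
  gadd T ->
  (forall a u, intgr a -> T (act X (phi (z%:R * a)) u) = act X (phi (z%:R * a)) (T u)) ->
  forall a u v, intgr a -> g v = a *: g u -> g (T v) = a *: g (T u).
Proof.
move=> gA ginj gphi TA Tphi a u v ha hv.
have e : act X (phi (z%:R * a)) u = v *+ z.
  by apply: ginj; rewrite gphi // (add_nat gA) hv -scalerA scaler_nat.
apply: (@cancel_nat _ _ _ _ _ z) => //.
by rewrite -(add_nat gA) -(add_nat TA) -e Tphi // gphi // -scalerA scaler_nat.
Qed.

Lemma mat_rep (X : gmod L) (g : gcar X -> 'rV[KK]_n) (T : gcar X -> gcar X)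
    (pre : 'I_n -> gcar X) :
  gadd g -> injective g -> (forall u i, intgr (g u 0 i)) ->
  (forall w : 'rV[KK]_n, (forall i, intgr (w 0 i)) -> exists u, g u = w) ->
  (forall a u, intgr a -> g (act X (phi (z%:R * a)) u) = (z%:R * a) *: g u) ->
  gadd T ->
  (forall a u, intgr a -> T (act X (phi (z%:R * a)) u) = act X (phi (z%:R * a)) (T u)) ->
  (forall i, g (pre i) = delta_mx 0 i) ->
  forall u, g (T u) = g u *m \matrix_(i, j) g (T (pre i)) 0 j.
Proof.
move=> gA ginj gint gsurj gphi TA Tphi hpre u.
have hv i : exists v, g v = (g u 0 i) *: delta_mx 0 i.
  apply: gsurj => j; rewrite !mxE; apply: intgr_mul => //; exact: intgr_nat.
have /fin_all_exists [v hv'] := hv.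
have Du : u = \sum_i v i.
  apply: ginj; rewrite (add_sum gA); rewrite [LHS]row_sum_delta.
  by apply: eq_bigr => i _; rewrite hv'.
have -> : T u = \sum_i T (v i) by rewrite {1}Du (add_sum TA).
rewrite (add_sum gA) mulmx_sum_row; apply: eq_bigr => i _.
rewrite (lin_lemma gA ginj gphi TA Tphi (u := pre i) (gint u i)); last by rewrite hv' hpre.
by congr (_ *: _); apply/rowP => j; rewrite !mxE.
Qed.


Local Notation iv := (ivec KK n).

Definition fmact := locked (fun (rho : L -> 'M[KK]_n) (x : L) (w : iv) =>
  insubd w (ival w *m rho x)).
Lemma fmactE rho x w : fmact rho x w = insubd w (ival w *m rho x).
Proof. by rewrite /fmact -lock. Qed.
Definition Fm (rho : L -> 'M[KK]_n) : gmod L := @GMod L iv (fmact rho).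

Lemma ivec_int (w : iv) i : intgr (ival w 0 i).
Proof. by move: (valP w) => /intvP. Qed.

Lemma intv_mul (w : 'rV[KK]_n) (M : 'M[KK]_n) :
  (forall i, intgr (w 0 i)) -> (forall i j, intgr (M i j)) -> w *m M \in intv KK n.
Proof. move=> hw hM; apply/intvP => i; apply: intgr_mulmx => // i' j; rewrite (ord1 i'); exact: hw. Qed.

Lemma Fm_act (rho : L -> 'M[KK]_n) x (w : iv) : (forall i j, intgr (rho x i j)) ->
  val (act (Fm rho) x w) = val w *m rho x.
Proof. by move=> h; rewrite /= fmactE insubdK //; apply: intv_mul => // i; apply: ivec_int. Qed.

Lemma rho_phi (rho : L -> 'M[KK]_n) : HomPhi G phi rho -> forall c, phi c \in G -> rho (phi c) = c%:M.
Proof.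
case=> r1 rD rM rI [f [f1 f2]] c hc.
have e1 : f 1 = 1%:M by have := f1 1 1%N isT; rewrite !mulr1n r1 => ->; rewrite ?G1.
have := f2 c 1; rewrite mulr1 e1 scalemx1 => <-.
by have := f1 (phi c) 1%N isT; rewrite !mulr1n => ->.
Qed.

Lemma Fm_phi (rho : L -> 'M[KK]_n) : HomPhi G phi rho -> forall c (w : iv), in_Zadj z c ->
  val (act (Fm rho) (phi c) w) = c *: val w.
Proof.
move=> hr c w hc; have hpc := phiG hc.
rewrite Fm_act; first by rewrite (rho_phi hr hpc) mul_mx_scalar.
by case: hr => _ _ _ rI _ i j; apply: rI.
Qed.

Lemma Fm_actG (rho : L -> 'M[KK]_n) x (w : iv) : HomPhi G phi rho -> x \in G ->
  val (act (Fm rho) x w) = val w *m rho x.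
Proof. by case=> _ _ _ rI _ hx; rewrite Fm_act // => i j; apply: rI. Qed.

Lemma Fm_ivalD (rho : L -> 'M[KK]_n) (u v : gcar (Fm rho)) :
  val (u + v) = val u + val v.
Proof. by []. Qed.

Lemma Fm_gmod (rho : L -> 'M[KK]_n) : HomPhi G phi rho -> is_gmod G (Fm rho).
Proof.
move=> hr; have [r1 rD rM rI _] := hr.
split.
- move=> x u v hx; apply: val_inj.
  rewrite Fm_ivalD !(Fm_actG _ hr hx) Fm_ivalD; exact: mulmxDl.
- move=> x y u hx hy; apply: val_inj.
  apply: (etrans (Fm_actG _ hr (GD hx hy))).
  rewrite (rD _ _ hx hy) mulmxDr.
  by rewrite Fm_ivalD -(Fm_actG u hr hx) -(Fm_actG u hr hy).
- move=> x y u hx hy; apply: val_inj.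
  rewrite (Fm_actG _ hr (GM hx hy)) (Fm_actG _ hr hx) (Fm_actG _ hr hy) mulrC (rM _ _ hy hx).
  exact: mulmxA.
- move=> u; apply: val_inj.
  by rewrite (Fm_actG _ hr G1) r1 mulmx1.
Qed.

Lemma Fm_inJ (rho : L -> 'M[KK]_n) : HomPhi G phi rho -> inJ phi n z (Fm rho).
Proof.
move=> hr; exists ival; split.
- by move=> u v; rewrite ivalD.
- exact: val_inj.
- exact: ivec_int.
- by move=> w hw; exists (IVec w (introT intvP hw)).
- by move=> c u hc; rewrite Fm_phi.
Qed.

Lemma pre_def i : delta_mx 0 i \in intv KK n.
Proof. by apply/intvP => j; rewrite mxE; apply: intgr_nat. Qed.
Definition pre i : iv := IVec (delta_mx 0 i) (pre_def i).

Lemma Fm_mat (rho : L -> 'M[KK]_n) (T : iv -> iv) : HomPhi G phi rho ->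
  gadd T ->
  (forall a u, intgr a -> T (act (Fm rho) (phi (z%:R * a)) u) = act (Fm rho) (phi (z%:R * a)) (T u)) ->
  forall u, val (T u) = val u *m \matrix_(i, j) val (T (pre i)) 0 j.
Proof.
move=> hr TA Tphi u.
apply: (@mat_rep (Fm rho) val T pre) => //.
- exact: val_inj.
- exact: ivec_int.
- by move=> w hw; exists (IVec w (introT intvP hw)).
- by move=> a v ha; rewrite (Fm_phi hr) //; apply: Zadj_gen.
Qed.

Lemma rowE1 m (A B : 'M[KK]_(n, m)) : (forall i, (delta_mx 0 i : 'rV_n) *m A = delta_mx 0 i *m B) -> A = B.
Proof. by move=> h; apply/row_matrixP => i; rewrite !rowE h. Qed.

Lemma iso_conj (rho rho' : L -> 'M[KK]_n) : HomPhi G phi rho -> HomPhi G phi rho' ->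
  gmod_iso G (Fm rho) (Fm rho') -> conjR G rho rho'.
Proof.
move=> hr hr' [h [hA [hi hK hiK] hc]].
have hiA : gadd hi.
  move=> u v; apply: (can_inj hK).
  exact: (etrans (hiK (u + v)) (esym (etrans (hA (hi u) (hi v)) (congr2 +%R (hiK u) (hiK v))))).
have Tph : forall a u, intgr a -> h (act (Fm rho) (phi (z%:R * a)) u) = act (Fm rho) (phi (z%:R * a)) (h u).
  move=> a u ha; have hz : in_Zadj z (z%:R * a) by apply: Zadj_gen.
  apply: val_inj.
  exact: (etrans (congr1 val (hc _ u (phiG hz))) (etrans (Fm_phi hr' (h u) hz) (esym (Fm_phi hr (h u) hz)))).
have Tph' : forall a u, intgr a -> hi (act (Fm rho) (phi (z%:R * a)) u) = act (Fm rho) (phi (z%:R * a)) (hi u).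
  by move=> a u ha; apply: (can_inj hK); rewrite Tph // !hiK.
have hU := Fm_mat hr hA Tph.
have hV := Fm_mat hr hiA Tph'.
set U := \matrix_(i, j) val (h (pre i)) 0 j in hU.
set V := \matrix_(i, j) val (hi (pre i)) 0 j in hV.
have UV : U *m V = 1%:M.
  apply: rowE1 => i; rewrite mulmx1 mulmxA.
  have -> : delta_mx 0 i = val (pre i) by [].
  by rewrite -hU -hV hK.
have VU : V *m U = 1%:M.
  apply: rowE1 => i; rewrite mulmx1 mulmxA.
  have -> : delta_mx 0 i = val (pre i) by [].
  by rewrite -hV -hU hiK.
exists U, V; split => //.
- by move=> i j; rewrite mxE; apply: ivec_int.
- by move=> i j; rewrite mxE; apply: ivec_int.
move=> x hx.
have e : rho x *m U = U *m rho' x.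
  apply: rowE1 => i; rewrite !mulmxA.
  have -> : delta_mx 0 i = val (pre i) by [].
  by rewrite -(Fm_actG (pre i) hr hx) -hU hc // -hU -(Fm_actG _ hr' hx).
by rewrite -mulmxA e mulmxA VU mul1mx.
Qed.

Lemma conj_iso (rho rho' : L -> 'M[KK]_n) : HomPhi G phi rho -> HomPhi G phi rho' ->
  conjR G rho rho' -> gmod_iso G (Fm rho) (Fm rho').
Proof.
move=> hr hr' [U [V [hUi hVi UV VU hx]]].
have mU (w : iv) : ival w *m U \in intv KK n by apply: intv_mul => // i; apply: ivec_int.
have mV (w : iv) : ival w *m V \in intv KK n by apply: intv_mul => // i; apply: ivec_int.
pose h (w : iv) : iv := IVec (ival w *m U) (mU w).
pose hi (w : iv) : iv := IVec (ival w *m V) (mV w).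
exists h; split.
- move=> u v; apply: val_inj; exact: mulmxDl.
- exists hi => w; apply: val_inj.
    by rewrite /= -mulmxA UV mulmx1.
  by rewrite /= -mulmxA VU mulmx1.
- move=> x u hxG; apply: val_inj.
  apply: (etrans (_ : _ = val (act (Fm rho) x u) *m U)); first by [].
  rewrite (Fm_actG u hr hxG); symmetry; rewrite (Fm_actG (h u) hr' hxG).
  rewrite [val (h u)]/= hx // !mulmxA.
  by rewrite -[ival u *m U *m V]mulmxA UV mulmx1.
Qed.

Lemma converse (X : gmod L) : is_gmod G X -> inJ phi n z X ->
  exists rho, HomPhi G phi rho /\ gmod_iso G X (Fm rho).
Proof.
move=> [aD aA aM a1] [g [gA ginj gint gsurj gphi]].
have /fin_all_exists [p hp] : forall i : 'I_n, exists u, g u = delta_mx 0 i.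
  by move=> i; apply: gsurj => j; rewrite mxE; exact: intgr_nat.
pose rho x := \matrix_(i, j) g (act X x (p i)) 0 j.
have gzphi : forall a u, intgr a -> g (act X (phi (z%:R * a)) u) = (z%:R * a) *: g u.
  by move=> a u ha; apply: gphi; apply: Zadj_gen.
have key : forall x u, x \in G -> g (act X x u) = g u *m rho x.
  move=> x u hx.
  apply: (mat_rep (T := act X x) gA ginj gint gsurj gzphi) => //.
  - by move=> v w; apply: aD.
  - move=> a v ha; have hz := hphi ha.
    by rewrite -aM // mulrC aM.
have rrow : forall x i, delta_mx 0 i *m rho x = g (act X x (p i)).
  by move=> x i; rewrite -rowE; apply/rowP => j; rewrite !mxE.
have r1 : rho 1 = 1%:M by apply: rowE1 => i; rewrite rrow a1 hp mulmx1.
have rD : forall x y, x \in G -> y \in G -> rho (x + y) = rho x + rho y.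
  by move=> x y hx hy; apply: rowE1 => i; rewrite mulmxDr !rrow aA // gA.
have rM : forall x y, x \in G -> y \in G -> rho (x * y) = rho x *m rho y.
  move=> x y hx hy; apply: rowE1 => i.
  by rewrite mulmxA !rrow [x * y]mulrC aM // key.
have rI : forall x i j, x \in G -> intgr (rho x i j).
  by move=> x i j _; rewrite mxE; apply: gint.
have rphi : forall c, in_Zadj z c -> rho (phi c) = c%:M.
  by move=> c hc; apply: rowE1 => i; rewrite rrow gphi // hp mul_mx_scalar.
have rho_nat : forall y k, y \in G -> rho (y *+ k) = rho y *+ k.
  move=> y k hy; elim: k => [|k IH].
    rewrite !mulr0n; apply: (addrI (rho 0)).
    by rewrite -rD ?G0 // !addr0.
  by rewrite !mulrS rD ?GN // IH.
pose mm x := epsilon (inhabits 1%N) (fun m => (0 < m)%N /\ x *+ m \in G).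
have hmm : forall x, (0 < mm x)%N /\ x *+ mm x \in G.
  move=> x; exact: (epsilon_spec (inhabits 1%N) (fun m => (0 < m)%N /\ x *+ m \in G) (@order_mult _ _ hG x)).
pose f x := ((mm x)%:R)^-1 *: rho (x *+ mm x).
have f1 : forall x m, (0 < m)%N -> x *+ m \in G -> f x *+ m = rho (x *+ m).
  move=> x m m0 hxm; have [m00 hx0] := hmm x.
  have e : rho (x *+ mm x) *+ m = rho (x *+ m) *+ mm x.
    by rewrite -!rho_nat // -!mulrnA mulnC.
  rewrite /f scalerMnr e -[rho (x *+ m) *+ mm x](scaler_nat (R := KK)) scalerA mulVf ?natr_neq0F // scale1r //.
have f2 : forall (a : KK) x, f (phi a * x) = a *: f x.
  move=> a x; have [d [d0 hd]] := @den_int _ a.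
  pose c : KK := z%:R * (d%:R * a).
  have hc : in_Zadj z c by apply: Zadj_gen.
  have [m0 hxm] := hmm x.
  pose N := (d * z * mm x)%N.
  have N0 : (0 < N)%N by rewrite /N !muln_gt0 m0 z0 d0.
  have e1 : (phi a * x) *+ N = phi c * (x *+ mm x).
    by rewrite /c /N !rmorphM !rmorph_nat mulrnAr !mulr_natl !mulrnAl !mulrnA.
  have hG' : (phi a * x) *+ N \in G by rewrite e1; apply: GM => //; apply: phiG.
  apply: (@cancel_nat _ _ _ _ _ _ N0); rewrite f1 // e1 rM //; last exact: phiG.
  rewrite rphi // mul_scalar_mx -f1 //.
  rewrite -!(scaler_nat (R := KK)) !scalerA; congr (_ *: _).
  by rewrite /c /N mulr_natr !mulr_natl !mulrnA.
have hrho : HomPhi G phi rho.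
  by split => //; exists f; split.
exists rho; split => //.
have gi u : g u \in intv KK n by apply/intvP => i; exact: gint.
pose gg u : iv := IVec (g u) (gi u).
pose gv (w : iv) := epsilon (inhabits 0) (fun u => g u = ival w).
have hgv : forall w, g (gv w) = ival w.
  move=> w; exact: (epsilon_spec (inhabits 0) (fun u => g u = ival w) (gsurj _ (ivec_int w))).
exists gg; split.
- by move=> u v; apply: val_inj; rewrite /= gA.
- exists gv => [u|w]; first by apply: ginj; rewrite hgv.
  by apply: val_inj; rewrite /= hgv.
- move=> x u hx; apply: val_inj; symmetry.
  exact: (etrans (Fm_actG (gg u) hrho hx) (esym (key x u hx))).
Qed.

End Main.

End Aux.
Import Aux.
Unset Implicit Arguments.

Theorem proposition10p5 (L : fieldExtType rat) (K : {subfield L}) (G : pred L)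
    (phi : {rmorphism subvs_of K -> L}) (n z : nat) :
  is_order G ->
  n = (\dim {:L} %/ \dim K)%N ->
  (0 < z)%N ->
  (forall a : subvs_of K, intgr a -> phi (z%:R * a) \in G) ->
  exists F : (L -> 'M[subvs_of K]_n) -> gmod L,
    [/\ forall rho, HomPhi G phi rho -> is_gmod G (F rho) /\ inJ phi n z (F rho),
        forall rho rho', HomPhi G phi rho -> HomPhi G phi rho' ->
          (gmod_iso G (F rho) (F rho') <-> conjR G rho rho') &
        forall X : gmod L, is_gmod G X -> inJ phi n z X ->
          exists rho, HomPhi G phi rho /\ gmod_iso G X (F rho)].
Proof.
move=> hG hn z0 hphi.
exists (@Fm L K n); split.
- move=> rho hr; split; first exact: (Fm_gmod hG hr).
  exact: (Fm_inJ hG hphi hr).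
- move=> rho rho' hr hr'; split; first exact: (iso_conj hG z0 hphi hr hr').
  exact: (conj_iso hr hr').
- move=> X hX hJ; exact: (converse hG z0 hphi hX hJ).
Qed.
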